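(* Let $n\ge 1$, let $a_1<a_2$ be constants, and let $f$ be continuous on $(0,\infty)$ with $f(t)\to 0$ as $t\to\infty$. Assume that for every constant $c\in[a_1,a_2]$, every nontrivial solution of $y''+\frac{n-1}{t}y'+\frac{c}{t^2}y=0$ has infinitely many roots (in $(T,\infty)$ for every $T>0$). Then for every constant $a\in(a_1,a_2)$, every nontrivial solution of \[ y''+\frac{n-1}{t}y'+\frac{a+f(t)}{t^2}y=0 \] has infinitely many roots (in $(T,\infty)$ for every $T>0$). *)

(* Defs.v *)
From Stdlib Require Import Reals.
Open Scope R_scope.

Definition is_solution (n : nat) (q : R -> R) (y : R -> R) : Prop :=
  exists y1 y2 : R -> R,
    forall t, 0 < t ->
      derivable_pt_lim y t (y1 t) /\
      derivable_pt_lim y1 t (y2 t) /\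
      y2 t + (INR n - 1) / t * y1 t + q t / (t ^ 2) * y t = 0.

Definition nontrivial (y : R -> R) : Prop := exists t, 0 < t /\ y t <> 0.

Definition oscillatory (y : R -> R) : Prop :=
  forall T, 0 < T -> exists t, T < t /\ y t = 0.

(* Main.v *)
Require Import Defs.
From Stdlib Require Import Reals Lra Classical.
From Coquelicot Require Import Coquelicot.
Open Scope R_scope.

Lemma decr (h h' : R -> R) a b : a <= b ->
  (forall c, a <= c <= b -> derivable_pt_lim h c (h' c)) ->
  (forall c, a <= c <= b -> h' c <= 0) -> h b <= h a.
Proof.
  intros Hab Hd Hn. destruct (Req_dec a b) as [->|Hne]; [lra|].
  destruct (MVT_cor2 h h' a b ltac:(lra) Hd) as [c [Hc Hc2]].
  assert (h' c * (b - a) <= 0).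
  { apply Rmult_le_0_r; [apply Hn; lra | lra]. }
  lra.
Qed.

Definition P (m t : R) := exp (m * ln t).

Lemma dP m t : 0 < t -> derivable_pt_lim (P m) t (P m t * (m / t)).
Proof.
  intros Ht. apply is_derive_Reals. unfold P. auto_derive; [lra|]. field. lra.
Qed.

Lemma Ppos m t : 0 < P m t.
Proof. apply exp_pos. Qed.

Lemma ln_bound t u : 0 < t -> ln (t * exp u) = ln t + u.
Proof. intros. rewrite ln_mult; [|lra|apply exp_pos]. now rewrite ln_exp. Qed.

Lemma core (m d t0 : R) (q y y1 y2 : R -> R) :
  0 < t0 -> 0 < d ->
  (forall t, t0 <= t -> derivable_pt_lim y t (y1 t) /\ derivable_pt_lim y1 t (y2 t) /\
      y2 t + (2*m+1)/t * y1 t + q t / t^2 * y t = 0) ->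
  (forall t, t0 <= t -> m*m + d <= q t) ->
  (forall t, t0 <= t -> 0 < y t) -> False.
Proof.
  intros Ht0 Hd Hs Hq Hy.
  set (U := fun t => P m t * y t).
  set (G := fun t => P m t * (m * y t + t * y1 t)).
  set (G' := fun t => P m t * y t / t * (m*m - q t)).
  assert (dU : forall t, t0 <= t -> derivable_pt_lim U t (G t / t)).
  { intros t Ht. destruct (Hs t Ht) as [h1 _].
    pose proof (derivable_pt_lim_mult (P m) y t _ _ (dP m t ltac:(lra)) h1) as H.
    unfold U, G. replace (P m t * (m * y t + t * y1 t) / t) with
      (P m t * (m / t) * y t + P m t * y1 t) by (field; lra). exact H. }
  assert (dG : forall t, t0 <= t -> derivable_pt_lim G t (G' t)).
  { intros t Ht. destruct (Hs t Ht) as [h1 [h2 h3]].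
    assert (h4 : derivable_pt_lim (fun s => m * y s + s * y1 s) t (m * y1 t + (1 * y1 t + t * y2 t))).
    { apply (derivable_pt_lim_plus (fun s => m * y s) (fun s => s * y1 s)).
      - apply (derivable_pt_lim_scal y m). exact h1.
      - apply (derivable_pt_lim_mult id y1). apply derivable_pt_lim_id. exact h2. }
    pose proof (derivable_pt_lim_mult (P m) _ t _ _ (dP m t ltac:(lra)) h4) as H.
    unfold G, G'.
    assert (e : y2 t = - ((2*m+1)/t * y1 t) - q t / t^2 * y t) by lra.
    rewrite e in H.
    replace (P m t * y t / t * (m * m - q t)) with
      (P m t * (m / t) * (m * y t + t * y1 t) +
       P m t * (m * y1 t + (1 * y1 t + t * (- ((2 * m + 1) / t * y1 t) - q t / t ^ 2 * y t)))) by (field; lra).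
    exact H. }
  assert (G'neg : forall t, t0 <= t -> G' t <= - d * U t / t).
  { intros t Ht. unfold G', U.
    assert (0 < P m t * y t / t).
    { apply Rdiv_lt_0_compat; [apply Rmult_lt_0_compat; [apply Ppos|apply Hy; lra]|lra]. }
    specialize (Hq t Ht).
    replace (- d * (P m t * y t) / t) with (P m t * y t / t * (-d)) by (field; lra).
    apply Rmult_le_compat_l; lra. }
  assert (Upos : forall t, t0 <= t -> 0 < U t).
  { intros t Ht. unfold U. apply Rmult_lt_0_compat; [apply Ppos|apply Hy; lra]. }
  assert (Gnn : forall t2, t0 <= t2 -> 0 <= G t2).
  { intros t2 Ht2. destruct (Rle_or_lt 0 (G t2)) as [|Hg]; [assumption|exfalso].
    set (g := G t2) in *.
    assert (Gle : forall t, t2 <= t -> G t <= g).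
    { intros t Ht. apply (decr G G' t2 t Ht).
      - intros c Hc. apply dG. lra.
      - intros c Hc. eapply Rle_trans; [apply G'neg; lra|].
        assert (0 < U c / c) by (apply Rdiv_lt_0_compat; [apply Upos; lra | lra]).
        replace (- d * U c / c) with (- (d * (U c / c))) by (field; lra).
        assert (0 < d * (U c / c)) by (apply Rmult_lt_0_compat; lra). lra. }
    set (t := t2 * exp (U t2 / (- g) + 1)).
    assert (Hex : 1 < exp (U t2 / (- g) + 1)).
    { rewrite <- exp_0 at 1. apply exp_increasing.
      assert (0 < U t2 / - g) by (apply Rdiv_lt_0_compat; [apply Upos; lra|lra]). lra. }
    assert (Htt : t2 <= t).
    { unfold t. assert (t2 * 1 <= t2 * exp (U t2 / - g + 1)) by (apply Rmult_le_compat_l; lra). lra. }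
    assert (HH : (fun s => U s - g * ln s) t <= (fun s => U s - g * ln s) t2).
    { apply (decr (fun s => U s - g * ln s) (fun s => G s / s - g * / s) t2 t Htt).
      - intros c Hc. apply derivable_pt_lim_minus. apply dU; lra.
        apply (derivable_pt_lim_scal ln g). apply derivable_pt_lim_ln. lra.
      - intros c Hc. replace (G c / c - g * / c) with ((G c - g) / c) by (field; lra).
        apply Rmult_le_0_r; [pose proof (Gle c ltac:(lra)); lra|].
        left; apply Rinv_0_lt_compat; lra. }
    simpl in HH. unfold t in HH at 2. rewrite ln_bound in HH by lra.
    pose proof (Upos t ltac:(lra)).
    assert (g * (ln t2 + (U t2 / - g + 1)) = g * ln t2 - U t2 + g) by (field; lra).
    unfold t in *. lra. }
  set (U0 := U t0).
  assert (Uge : forall t, t0 <= t -> U0 <= U t).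
  { intros t Ht. assert (- U t <= - U t0); [|unfold U0; lra].
    apply (decr (fun s => - U s) (fun s => - (G s / s)) t0 t Ht).
    - intros c Hc. apply derivable_pt_lim_opp. apply dU; lra.
    - intros c Hc. assert (0 <= G c / c); [|lra].
      apply Rdiv_le_0_compat; [apply Gnn; lra|lra]. }
  assert (HU0 : 0 < U0) by (apply Upos; lra).
  set (t := t0 * exp (G t0 / (d * U0) + 1)).
  assert (Hex : 1 < exp (G t0 / (d * U0) + 1)).
  { rewrite <- exp_0 at 1. apply exp_increasing.
    assert (0 <= G t0 / (d * U0)) by (apply Rdiv_le_0_compat; [apply Gnn; lra|apply Rmult_lt_0_compat; lra]). lra. }
  assert (Htt : t0 <= t).
  { unfold t. assert (t0 * 1 <= t0 * exp (G t0 / (d * U0) + 1)) by (apply Rmult_le_compat_l; lra). lra. }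
  assert (HH : (fun s => G s + d * U0 * ln s) t <= (fun s => G s + d * U0 * ln s) t0).
  { apply (decr (fun s => G s + d * U0 * ln s) (fun s => G' s + d * U0 * / s) t0 t Htt).
    - intros c Hc. apply derivable_pt_lim_plus. apply dG; lra.
      apply (derivable_pt_lim_scal ln (d * U0)). apply derivable_pt_lim_ln. lra.
    - intros c Hc. eapply Rle_trans.
      + apply Rplus_le_compat_r. apply G'neg. lra.
      + replace (- d * U c / c + d * U0 * / c) with (d * (U0 - U c) / c) by (field; lra).
        apply Rmult_le_0_r; [|left; apply Rinv_0_lt_compat; lra].
        pose proof (Uge c ltac:(lra)).
        assert (0 <= d * (U c - U0)) by (apply Rmult_le_pos; lra).
        lra. }
  simpl in HH. unfold t in HH at 2. rewrite ln_bound in HH by lra.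
  pose proof (Gnn t Htt).
  assert (d * U0 * (ln t0 + (G t0 / (d * U0) + 1)) = d * U0 * ln t0 + G t0 + d * U0) by (field; lra).
  assert (0 < d * U0) by (apply Rmult_lt_0_compat; lra).
  unfold t in *. lra.
Qed.

Lemma nonosc (n : nat) (c : R) : c <= ((INR n - 2)/2) * ((INR n - 2)/2) ->
  exists y, is_solution n (fun _ => c) y /\ nontrivial y /\ ~ oscillatory y.
Proof.
  intros Hc. set (m := (INR n - 2)/2) in *.
  set (s := sqrt (m*m - c)). set (r := - m + s).
  assert (Hs : s * s = m * m - c) by (apply sqrt_sqrt; lra).
  exists (fun t => exp (r * ln t)). split; [|split].
  - exists (fun t => r * exp (r * ln t) / t), (fun t => r * (r - 1) * exp (r * ln t) / (t * t)).
    intros t Ht. split; [|split].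
    + apply is_derive_Reals. auto_derive; [lra|]. field. lra.
    + apply is_derive_Reals. auto_derive; [lra|]. field. lra.
    + replace (INR n - 1) with (2 * m + 1) by (unfold m; field).
      replace (r * (r - 1) * exp (r * ln t) / (t * t) + (2 * m + 1) / t * (r * exp (r * ln t) / t) +
        c / t ^ 2 * exp (r * ln t)) with (exp (r * ln t) / (t * t) * (r * r + 2 * m * r + c)) by (field; lra).
      replace (r * r + 2 * m * r + c) with (s * s - (m * m - c)) by (unfold r; ring).
      rewrite Hs. ring.
  - exists 1. split; [lra|]. rewrite ln_1, Rmult_0_r, exp_0. lra.
  - intros H. destruct (H 1 ltac:(lra)) as [t [_ Ht]]. pose proof (exp_pos (r * ln t)). lra.
Qed.

Theorem lemma3p3 (n : nat) (a1 a2 : R) (f : R -> R) :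
  (1 <= n)%nat ->
  a1 < a2 ->
  (forall t, 0 < t -> continuity_pt f t) ->
  (forall eps, 0 < eps -> exists M, forall t, M < t -> Rabs (f t) < eps) ->
  (forall c, a1 <= c <= a2 ->
     forall y, is_solution n (fun _ => c) y -> nontrivial y -> oscillatory y) ->
  forall a, a1 < a < a2 ->
    forall y, is_solution n (fun t => a + f t) y -> nontrivial y -> oscillatory y.
Proof.
  intros _ Ha12 _ Hf Hosc a Ha y [y1 [y2 Hs]] _.
  set (m := (INR n - 2)/2).
  assert (Hm : m * m < a1).
  { destruct (Rlt_or_le (m*m) a1) as [|Hle]; [assumption|exfalso].
    destruct (nonosc n a1 Hle) as [z [Hz1 [Hz2 Hz3]]].
    apply Hz3. apply (Hosc a1); [lra|assumption|assumption]. }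
  intros T HT.
  apply NNPP. intros Hno.
  destruct (Hf (a - a1) ltac:(lra)) as [M HM].
  set (t0 := Rmax (T + 1) (M + 1)).
  assert (Ht0T : T < t0) by (unfold t0; pose proof (Rmax_l (T+1) (M+1)); lra).
  assert (Ht0M : M < t0) by (unfold t0; pose proof (Rmax_r (T+1) (M+1)); lra).
  assert (Hnz : forall t, T < t -> y t <> 0) by (intros t Ht Hyt; apply Hno; exists t; split; assumption).
  assert (Hs' : forall t, t0 <= t -> derivable_pt_lim y t (y1 t) /\ derivable_pt_lim y1 t (y2 t) /\
      y2 t + (2*m+1)/t * y1 t + (a + f t) / t^2 * y t = 0).
  { intros t Ht. replace (2 * m + 1) with (INR n - 1) by (unfold m; field). apply Hs. lra. }
  assert (Hq : forall t, t0 <= t -> m*m + (a1 - m*m) <= a + f t).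
  { intros t Ht. specialize (HM t ltac:(lra)). apply Rabs_def2 in HM. lra. }
  assert (Hcont : forall t, t0 <= t -> continuity_pt y t).
  { intros t Ht. apply derivable_continuous_pt. exists (y1 t). apply (proj1 (Hs' t Ht)). }
  destruct (Rlt_or_le 0 (y t0)) as [Hp|Hn].
  - apply (core m (a1 - m*m) t0 (fun t => a + f t) y y1 y2); try lra; try assumption.
    intros t Ht. destruct (Rlt_or_le 0 (y t)) as [|Hyt]; [assumption|exfalso].
    destruct Hyt as [Hyt|Hyt]; [|apply (Hnz t); lra].
    assert (t0 < t) by (destruct Ht as [|<-]; [assumption|lra]).
    destruct (Ranalysis5.IVT_interv (fun s => - y s) t0 t) as [z [Hz1 Hz2]]; try lra.
    + intros b Hb. apply continuity_pt_opp. apply Hcont. lra.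
    + apply (Hnz z); lra.
  - assert (Hn' : y t0 < 0) by (destruct Hn; [assumption|exfalso; apply (Hnz t0); lra]).
    apply (core m (a1 - m*m) t0 (fun t => a + f t) (fun t => - y t) (fun t => - y1 t) (fun t => - y2 t)); try lra.
    + intros t Ht. destruct (Hs' t Ht) as [h1 [h2 h3]]. split; [|split].
      * apply derivable_pt_lim_opp. exact h1.
      * apply derivable_pt_lim_opp. exact h2.
      * lra.
    + assumption.
    + intros t Ht. destruct (Rlt_or_le 0 (- y t)) as [|Hyt]; [assumption|exfalso].
      destruct Hyt as [Hyt|Hyt]; [|apply (Hnz t); lra].
      assert (t0 < t) by (destruct Ht as [|<-]; [assumption|lra]).
      destruct (Ranalysis5.IVT_interv y t0 t) as [z [Hz1 Hz2]]; try lra.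
      * intros b Hb. apply Hcont. lra.
      * apply (Hnz z); lra.
Qed.
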